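(* Consider a twice continuously differentiable function $f(X_1,\dots,X_k)$ with $X_i\in\operatorname{Gr}(n_i,r_i)$, $i=1,\dots,k$, to be minimized. Let $X_i(t)$ be the geodesics defined by tangents $\Delta_i\in\mathbf{T}_{X_i}$, with corresponding parallel transported tangent space basis matrices $Y_i(t)=T_{X_i,\Delta_i}(t)Y_i$, where $[X_i\;Y_i]$ is orthogonal. When tangents and operators are expressed in local coordinates in these bases, the BFGS update of the Hessian approximation on the product of Grassmannians, \[ \mathcal{H}_{+}=\mathcal{H}-\frac{\langle\mathcal{H},S\rangle\otimes\langle\mathcal{H},S\rangle}{\langle\langle\mathcal{H},S\rangle,S\rangle}+\frac{Y\otimes Y}{\langle S,Y\rangle}, \] has the same optimality properties as the BFGS update for a function with variables in a Euclidean space, i.e. it is the least change update of the current Hessian approximation that satisfies the secant equation.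
   Context: Points of $\operatorname{Gr}(n,r)$ are $n\times r$ matrices with orthonormal columns; $\mathbf{T}_X=\{\Delta: X^{\mathsf{T}}\Delta=0\}$ with inner product $\operatorname{tr}(\Delta_1^{\mathsf{T}}\Delta_2)$; in the basis $Y$ (with $[X\;Y]$ orthogonal) a tangent $\Delta=YD$ has local coordinates $D=Y^{\mathsf{T}}\Delta$. For thin SVD $\Delta=U\Sigma V^{\mathsf{T}}$ the geodesic is $X(t)=[XV\;U]\begin{bmatrix}\cos\Sigma t\\ \sin\Sigma t\end{bmatrix}V^{\mathsf{T}}$ and the transport matrix is $T_{X,\Delta}(t)=[XV\;U]\begin{bmatrix}-\sin\Sigma t\\ \cos\Sigma t\end{bmatrix}U^{\mathsf{T}}+(I-UU^{\mathsf{T}})$. The Grassmann gradient of $f$ in the $i$th variable is $\Pi_{X_i}\partial f/\partial X_i$ with $\Pi_{X_i}=I-X_iX_i^{\mathsf{T}}$. In a quasi-Newton step from $(X_1,\dots,X_k)$ with search direction $(\Delta_1,\dots,\Delta_k)$ and step length $t_k$, one sets $S=(S_1,\dots,S_k)$, $S_i=t_kT_{X_i,\Delta_i}(t_k)\Delta_i$, and $Y=(Y^{(1)},\dots,Y^{(k)})$ with $Y^{(i)}$ the gradient component at the new point minus the transported ($T_{X_i,\Delta_i}(t_k)$) gradient component at the old point; in local coordinates these are expressed in the bases $Y_i(t_k)$. The Hessian approximation $\mathcal{H}$ is a linear operator on $\mathbf{T}_{X_1}\times\dots\times\mathbf{T}_{X_k}$ (block form with blocks $\mathcal{H}_{ij}:\mathbf{T}_{X_j}\to\mathbf{T}_{X_i}$);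 $\langle\mathcal{H},S\rangle$ denotes its action on $S$, $\langle S,Y\rangle=\sum_i\langle S_i,Y^{(i)}\rangle$, and $\Delta\otimes\Gamma$ for tuples is the block operator with blocks $\Delta_i\otimes\Gamma_j$ (i.e. $\Gamma\mapsto$ the rank-one operator $Z\mapsto\langle\Gamma,Z\rangle\Delta$ blockwise). Euclidean BFGS optimality (as meant here): for $s\neq 0$, $y$ with $y^{\mathsf{T}}s>0$ and $H=LL^{\mathsf{T}}$ ($L$ invertible), the BFGS update $H_+=H-\frac{Hss^{\mathsf{T}}H}{s^{\mathsf{T}}Hs}+\frac{yy^{\mathsf{T}}}{y^{\mathsf{T}}s}$ satisfies $H_+s=y$, is symmetric positive definite, and equals $L_+L_+^{\mathsf{T}}$ where $L_+$ is the Frobenius-nearest matrix to $L$ mapping $v$ to $y$, with $v=\alpha L^{\mathsf{T}}s$, $\alpha^2=y^{\mathsf{T}}s/s^{\mathsf{T}}Hs$. *)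

(* Defs.v *)
From HB Require Import structures.
From mathcomp Require Import all_boot all_order all_algebra.
From mathcomp Require Import all_classical all_reals all_analysis.
Set Implicit Arguments.
Unset Strict Implicit.
Unset Printing Implicit Defensive.
Import Order.TTheory GRing.Theory Num.Theory.
Local Open Scope ring_scope.

Section Grassmann.
Variable R : realType.

Definition cosm (m : nat) (sigma : 'rV[R]_m) (t : R) : 'M[R]_m :=
  diag_mx (\row_j cos (sigma 0 j * t)).
Definition sinm (m : nat) (sigma : 'rV[R]_m) (t : R) : 'M[R]_m :=
  diag_mx (\row_j sin (sigma 0 j * t)).

Definition thin_svd (n r : nat) (Delta U : 'M[R]_(n, r)) (sigma : 'rV[R]_r)
    (V : 'M[R]_r) : Prop :=
  [/\ Delta = U *m diag_mx sigma *m V^T, U^T *m U = 1%:M,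
      V^T *m V = 1%:M & forall j, 0 <= sigma 0 j].

(* [X Y] is an orthogonal (square) matrix *)
Definition orth_compl (n r : nat) (X : 'M[R]_(n, r)) (Y : 'M[R]_(n, n - r))
  : Prop :=
  [/\ X^T *m X = 1%:M, Y^T *m Y = 1%:M, X^T *m Y = 0
    & X *m X^T + Y *m Y^T = 1%:M].

Definition geod (n r : nat) (X U : 'M[R]_(n, r)) (sigma : 'rV[R]_r)
    (V : 'M[R]_r) (t : R) : 'M[R]_(n, r) :=
  row_mx (X *m V) U *m col_mx (cosm sigma t) (sinm sigma t) *m V^T.

Definition transp (n r : nat) (X U : 'M[R]_(n, r)) (sigma : 'rV[R]_r)
    (V : 'M[R]_r) (t : R) : 'M[R]_n :=
  row_mx (X *m V) U *m col_mx (- sinm sigma t) (cosm sigma t) *m U^T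
  + (1%:M - U *m U^T).

Variables (k : nat) (n r : 'I_k -> nat).

Definition fam := forall i : 'I_k, 'M[R]_(n i, r i).

Definition ipf (A B : fam) : R := \sum_(i < k) \tr ((A i)^T *m B i).

(* dimension of the local-coordinate space *)
Definition Ndim : nat := (\sum_(i < k) ((n i - r i) * r i))%N.

(* local coordinates of a tuple of tangents in the bases Yb_i, stacked *)
Definition coordvec (Yb : forall i, 'M[R]_(n i, n i - r i)) (Z : fam)
  : 'cV[R]_Ndim :=
  mxcol (p_ := fun i => ((n i - r i) * r i)%N)
    (fun i => (mxvec ((Yb i)^T *m Z i))^T).

Definition locdecode (Yb : forall i, 'M[R]_(n i, n i - r i)) (c : 'cV[R]_Ndim)
  : fam :=
  fun i => Yb i *m vec_mx (submxcol (p_ := fun i => ((n i - r i) * r i)%N) c i)^T.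

End Grassmann.

Section Euclid.
Variable R : realType.
Variable N : nat.

Definition bfgs_mx (H : 'M[R]_N) (s y : 'cV[R]_N) : 'M[R]_N :=
  H - ((s^T *m H *m s) 0 0)^-1 *: (H *m s *m (H *m s)^T)
    + ((y^T *m s) 0 0)^-1 *: (y *m y^T).

Definition frob_nearest (L : 'M[R]_N) (v y : 'cV[R]_N) (Lp : 'M[R]_N) : Prop :=
  Lp *m v = y /\
  forall M : 'M[R]_N, M *m v = y ->
    \tr ((Lp - L)^T *m (Lp - L)) <= \tr ((M - L)^T *m (M - L)).

(* the optimality properties of the Euclidean BFGS update, for H = L L^T *)
Definition bfgs_optimal (H L : 'M[R]_N) (s y : 'cV[R]_N) (Hp : 'M[R]_N) : Prop :=
  [/\ Hp *m s = y,
      Hp^T = Hp,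
      (forall x : 'cV[R]_N, x != 0 -> 0 < (x^T *m Hp *m x) 0 0) &
      forall alpha : R,
        alpha ^+ 2 = (y^T *m s) 0 0 / (s^T *m H *m s) 0 0 ->
        (exists Lp, frob_nearest L (alpha *: (L^T *m s)) y Lp) /\
        (forall Lp, frob_nearest L (alpha *: (L^T *m s)) y Lp ->
           Hp = Lp *m Lp^T)].
End Euclid.

(* Main.v *)
Require Import Defs.
From HB Require Import structures.
From mathcomp Require Import all_boot all_order all_algebra.
From mathcomp Require Import all_classical all_reals all_analysis.
From mathcomp Require Import ring lra.
Import Order.TTheory GRing.Theory Num.Theory.
Local Open Scope ring_scope.

Set Implicit Arguments.
Unset Strict Implicit.
Section Dot.
Variable R : realType.
Definition dot N (u v : 'cV[R]_N) : R := (u^T *m v) 0 0.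
Arguments dot {N}.
Lemma dotE N (u v : 'cV[R]_N) : dot u v = \sum_i u i 0 * v i 0.
Proof. by rewrite /dot mxE; apply: eq_bigr => i _; rewrite mxE. Qed.
Lemma dotC N (u v : 'cV[R]_N) : dot u v = dot v u.
Proof. by rewrite !dotE; apply: eq_bigr => i _; rewrite mulrC. Qed.
Lemma dotDl N (u w v : 'cV[R]_N) : dot (u + w) v = dot u v + dot w v.
Proof. by rewrite !dotE -big_split; apply: eq_bigr => i _; rewrite mxE mulrDl. Qed.
Lemma dotNl N (u v : 'cV[R]_N) : dot (- u) v = - dot u v.
Proof. by rewrite !dotE -sumrN; apply: eq_bigr => i _; rewrite mxE mulNr. Qed.
Lemma dotZl N a (u v : 'cV[R]_N) : dot (a *: u) v = a * dot u v.
Proof. by rewrite !dotE mulr_sumr; apply: eq_bigr => i _; rewrite mxE mulrA. Qed.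
Lemma dotBl N (u w v : 'cV[R]_N) : dot (u - w) v = dot u v - dot w v.
Proof. by rewrite dotDl dotNl. Qed.
Lemma dotDr N (u w v : 'cV[R]_N) : dot v (u + w) = dot v u + dot v w.
Proof. by rewrite dotC dotDl !(dotC v). Qed.
Lemma dotBr N (u w v : 'cV[R]_N) : dot v (u - w) = dot v u - dot v w.
Proof. by rewrite dotC dotBl !(dotC v). Qed.
Lemma dotZr N a (u v : 'cV[R]_N) : dot v (a *: u) = a * dot v u.
Proof. by rewrite dotC dotZl dotC. Qed.
Lemma dot_ge0 N (u : 'cV[R]_N) : 0 <= dot u u.
Proof. by rewrite dotE; apply: sumr_ge0 => i _; rewrite -expr2 sqr_ge0. Qed.
Lemma dot_eq0 N (u : 'cV[R]_N) : dot u u = 0 -> u = 0.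
Proof.
rewrite dotE => /psumr_eq0P H; apply/matrixP => i j; rewrite (ord1 j) mxE.
have /eqP : u i 0 * u i 0 = 0 by apply: H => // k _; rewrite -expr2 sqr_ge0.
by rewrite mulf_eq0 orbb => /eqP.
Qed.
Lemma dotMl N (A : 'M[R]_N) (u v : 'cV[R]_N) : dot (A *m u) v = dot u (A^T *m v).
Proof. by rewrite /dot trmx_mul mulmxA. Qed.
Lemma outer m N (u : 'M[R]_(m,1)) (v x : 'cV[R]_N) : u *m (v^T *m x) = dot v x *: u.
Proof. by rewrite [v^T *m x]mx11_scalar mul_mx_scalar. Qed.
Lemma outer_entry m p (u : 'cV[R]_m) (v : 'cV[R]_p) i j :
  (u *m v^T) i j = u i 0 * v j 0.
Proof. by rewrite mxE big_ord1 mxE. Qed.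

Lemma bfgs_mul N (H : 'M[R]_N) s y x :
  bfgs_mx H s y *m x = H *m x - (((s^T *m H *m s) 0 0)^-1 * dot (H *m s) x) *: (H *m s)
     + (((y^T *m s) 0 0)^-1 * dot y x) *: y.
Proof.
rewrite /bfgs_mx !mulmxDl mulNmx -!scalemxAl -!mulmxA !outer !scalerA.
by rewrite scalemxAr scalerA -scalemxAr.
Qed.
End Dot.
Section Frob.
Variable R : realType.
Definition fn m p (E : 'M[R]_(m,p)) := \tr (E^T *m E).
Lemma fnE m p (E : 'M[R]_(m,p)) : fn E = \sum_i \sum_j E j i * E j i.
Proof. by rewrite /fn /mxtrace; apply: eq_bigr => i _; rewrite mxE; apply: eq_bigr => j _; rewrite mxE. Qed.
Lemma fn_ge0 m p (E : 'M[R]_(m,p)) : 0 <= fn E.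
Proof. by rewrite fnE; apply: sumr_ge0 => i _; apply: sumr_ge0 => j _; rewrite -expr2 sqr_ge0. Qed.
Lemma fn_eq0 m p (E : 'M[R]_(m,p)) : fn E = 0 -> E = 0.
Proof.
rewrite fnE => /psumr_eq0P H.
have H1 : forall i, \sum_j E j i * E j i = 0.
  move=> i; apply: H => // k _; apply: sumr_ge0 => j _; by rewrite -expr2 sqr_ge0.
apply/matrixP => j i; rewrite mxE.
move/psumr_eq0P: (H1 i) => H2.
have /eqP : E j i * E j i = 0 by apply: H2 => // k _; rewrite -expr2 sqr_ge0.
by rewrite mulf_eq0 orbb => /eqP.
Qed.
Lemma fnD m p (A E : 'M[R]_(m,p)) : fn (A + E) = fn A + 2 * \tr (A^T *m E) + fn E.
Proof.
rewrite /fn [(A + E)^T]linearD /= mulmxDl !mulmxDr !mxtraceD.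
have -> : \tr (E^T *m A) = \tr (A^T *m E) by rewrite -mxtrace_tr trmx_mul trmxK.
by rewrite mulr2n mulrDl mul1r !addrA.
Qed.

Lemma outer_mx m p (u : 'cV[R]_m) (v : 'cV[R]_p) :
  u *m v^T = \matrix_(i, j) (u i 0 * v j 0).
Proof. by apply/matrixP => i j; rewrite outer_entry mxE. Qed.

Lemma frob_sol N (L : 'M[R]_N) (v y : 'cV[R]_N) : dot v v != 0 ->
  let Lp0 := L + (dot v v)^-1 *: ((y - L *m v) *m v^T) in
  frob_nearest L v y Lp0 /\ (forall Lp, frob_nearest L v y Lp -> Lp = Lp0).
Proof.
move=> nz Lp0.
have Lp0v : Lp0 *m v = y.
  rewrite /Lp0 mulmxDl -scalemxAl -mulmxA outer scalerA mulVf // scale1r.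
by rewrite addrC subrK.
have key : forall M, M *m v = y -> fn (M - L) = fn (Lp0 - L) + fn (M - Lp0).
  move=> M Mv.
  have -> : M - L = (Lp0 - L) + (M - Lp0) by rewrite [RHS]addrC addrA subrK.
  rewrite fnD.
  suff -> : \tr ((Lp0 - L)^T *m (M - Lp0)) = 0 by rewrite mulr0 addr0.
  have -> : Lp0 - L = (dot v v)^-1 *: ((y - L *m v) *m v^T) by rewrite /Lp0 addrC addKr.
  rewrite linearZ /= -scalemxAl mxtraceZ trmx_mul trmxK -mulmxA mxtrace_mulC -mulmxA.
  by rewrite mulmxBl Mv Lp0v subrr mulmx0 linear0 mulr0.
split.
  split => // M Mv; change (fn (Lp0 - L) <= fn (M - L)); rewrite (key M Mv) lerDl; exact: fn_ge0.
move=> Lp [Lpv Lpmin].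
have : fn (Lp - L) <= fn (Lp0 - L) := Lpmin Lp0 Lp0v.
rewrite (key Lp Lpv) -lerBrDl subrr => h.
apply/eqP; rewrite -subr_eq0; apply/eqP; apply: fn_eq0.
by apply/eqP; rewrite eq_le h fn_ge0.
Qed.
End Frob.
Section Opt.
Variable R : realType.
Lemma outer_expand N (L : 'M[R]_N) (v w : 'cV[R]_N) c :
  (L + c *: (w *m v^T)) *m (L + c *: (w *m v^T))^T =
  L *m L^T + c *: ((L *m v) *m w^T) + c *: (w *m (L *m v)^T) + (c ^+ 2 * dot v v) *: (w *m w^T).
Proof.
rewrite raddfD /= linearZ /= trmx_mul trmxK mulmxDl !mulmxDr.
have e1 : L *m (c *: (v *m w^T)) = c *: ((L *m v) *m w^T) by rewrite -scalemxAr mulmxA.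
have e2 : c *: (w *m v^T) *m L^T = c *: (w *m (L *m v)^T) by rewrite -scalemxAl trmx_mul mulmxA.
have e3 : c *: (w *m v^T) *m (c *: (v *m w^T)) = (c ^+ 2 * dot v v) *: (w *m w^T).
  rewrite -scalemxAl -scalemxAr !mulmxA -(mulmxA w) outer -scalemxAl !scalerA.
  by rewrite expr2 mulrA.
by rewrite e1 e2 e3 !addrA.
Qed.
Lemma bfgs_opt N (H L : 'M[R]_N) s y : L \in unitmx -> H = L *m L^T ->
  0 < dot y s -> bfgs_optimal H L s y (bfgs_mx H s y).
Proof.
move=> hL hH ys.
have Hsym : H^T = H by rewrite hH trmx_mul trmxK.
have LTu : L^T \in unitmx by rewrite unitmx_tr.
set u0 := L^T *m s.
have dotH : forall x z, dot (H *m x) z = dot (L^T *m x) (L^T *m z).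
  by move=> x z; rewrite hH -mulmxA dotMl.
have aE : (s^T *m H *m s) 0 0 = dot u0 u0.
  by rewrite -mulmxA -/(dot s (H *m s)) dotC dotH.
have bE : (y^T *m s) 0 0 = dot y s by [].
have s0 : s != 0.
  by apply/eqP => s0; move: ys; rewrite s0 /dot mulmx0 mxE ltxx.
have u00 : u0 != 0.
  apply/eqP => u0E; move/eqP: s0; apply.
  by rewrite -(mulKmx LTu s) -/u0 u0E mulmx0.
have apos : 0 < dot u0 u0.
  rewrite lt_def dot_ge0 andbT; apply/eqP => /dot_eq0 /eqP; exact/negP.
have anz : dot u0 u0 != 0 by rewrite gt_eqF.
have bnz : dot y s != 0 by rewrite gt_eqF.
split.
- rewrite bfgs_mul aE bE dotH -/u0 mulVf // scale1r subrr add0r.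
  by rewrite mulVf ?scale1r.
- rewrite /bfgs_mx !raddfD /= !raddfN /= !linearZ /=.
  by rewrite !trmx_mul !trmxK Hsym.
- move=> x x0.
  rewrite -mulmxA -/(dot x _) bfgs_mul aE bE dotDr dotBr !dotZr.
  rewrite -[dot x (H *m x)]dotC -[dot x (H *m s)]dotC !dotH -/u0.
  set v := L^T *m x.
  set lam := dot v u0 / dot u0 u0.
  have e1 : dot (v - lam *: u0) (v - lam *: u0) =
      dot v v - dot u0 v * dot v u0 / dot u0 u0.
    rewrite dotBl !dotBr !dotZl !dotZr (dotC u0 v) /lam.
    field; by rewrite anz.
  have e2 : dot v v - (dot u0 u0)^-1 * dot u0 v * dot u0 v + (dot y s)^-1 * dot y x * dot x y
       = dot (v - lam *: u0) (v - lam *: u0) + dot y x ^+ 2 / dot y s.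
    rewrite e1 (dotC x y) (dotC v u0); field; by rewrite bnz anz.
  rewrite e2.
  have t1 := dot_ge0 (v - lam *: u0).
  have t2 : 0 <= dot y x ^+ 2 / dot y s by rewrite divr_ge0 ?sqr_ge0 // ltW.
  rewrite lt_def (addr_ge0 t1 t2) andbT.
  apply/negP => /eqP /eqP; rewrite paddr_eq0 // => /andP [/eqP h1 /eqP h2].
  move: (dot_eq0 h1) => /eqP; rewrite subr_eq0 => /eqP vE.
  have xE : x = lam *: s.
    by rewrite -(mulKmx LTu x) -/v vE /u0 -scalemxAr mulKmx.
  have yx0 : dot y x = 0.
    by move: h2 => /eqP; rewrite mulf_eq0 invr_eq0 (negPf bnz) orbF expf_eq0 /= => /eqP.
  move: yx0; rewrite xE dotZr => /eqP; rewrite mulf_eq0 (negPf bnz) orbF => /eqP lam0.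
  by move: x0; rewrite xE lam0 scale0r eqxx.
- move=> alpha halpha.
  set vv := alpha *: u0.
  have vvE : dot vv vv = dot y s.
    rewrite /vv dotZl dotZr mulrA -expr2 halpha aE bE.
    by rewrite mulfVK.
  have vnz : dot vv vv != 0 by rewrite vvE.
  have [FN UN] := frob_sol L y vnz.
  split; first by eexists; exact: FN.
  move=> Lp /UN ->.
  set c := (dot vv vv)^-1.
  set w0 := y - L *m vv.
  have Lv : L *m vv = alpha *: (H *m s) by rewrite /vv -scalemxAr hH mulmxA.
  rewrite outer_expand -hH.
  rewrite /w0 Lv /bfgs_mx aE bE -vvE /c.
  have al2 : alpha ^+ 2 != 0 by rewrite halpha aE bE mulf_neq0 ?invr_eq0.
  have aE' : dot u0 u0 = dot vv vv / alpha ^+ 2.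
    by rewrite /vv dotZl dotZr mulrA -expr2 [_ * dot _ _]mulrC mulfK.
  rewrite aE' invf_div.
  apply/matrixP => i j; rewrite !outer_mx !mxE.
  field; by rewrite vnz.
Qed.
End Opt.
Section Geo.
Variable R : realType.
Lemma mid4 a b c d e (P : 'M[R]_(a,b)) (Q : 'M[R]_(b,c)) (S : 'M[R]_(c,d)) (T : 'M[R]_(d,e)) :
  P *m Q *m (S *m T) = P *m (Q *m S) *m T.
Proof. by rewrite !mulmxA. Qed.

Lemma orth_sq n (M : 'M[R]_n) : M^T *m M = 1%:M -> M *m M^T = 1%:M.
Proof. exact: mulmx1C. Qed.

Lemma block_orth p q (A : 'M[R]_(p + q, p)) (B : 'M[R]_(p + q, q)) :
  A^T *m A = 1%:M -> B^T *m B = 1%:M -> A^T *m B = 0 ->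
  A *m A^T + B *m B^T = 1%:M.
Proof.
move=> hA hB hAB.
have hBA : B^T *m A = 0 by rewrite -[B^T *m A]trmxK trmx_mul trmxK hAB trmx0.
have : (row_mx A B)^T *m row_mx A B = 1%:M.
  by rewrite tr_row_mx mul_col_row hA hB hAB hBA -scalar_mx_block.
move/mulmx1C; by rewrite tr_row_mx mul_row_col.
Qed.

Lemma block_orth' m p q (E : (p + q)%N = m) (A : 'M[R]_(m, p)) (B : 'M[R]_(m, q)) :
  A^T *m A = 1%:M -> B^T *m B = 1%:M -> A^T *m B = 0 ->
  A *m A^T + B *m B^T = 1%:M.
Proof. by case: m / E A B; exact: block_orth. Qed.

Lemma rank_le m p (X : 'M[R]_(m, p)) : X^T *m X = 1%:M -> (p <= m)%N.
Proof.
move=> h; rewrite -[p](mxrank1 R) -h.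
exact: leq_trans (mxrankM_maxl _ _) (rank_leq_col _).
Qed.

Lemma diag_mul_entry m (a b : 'rV[R]_m) i j :
  (diag_mx a *m diag_mx b) i j = a 0 i * b 0 i *+ (i == j).
Proof. by rewrite mul_diag_mx !mxE mulrnAr. Qed.

Lemma diagC m (a b : 'rV[R]_m) : diag_mx a *m diag_mx b = diag_mx b *m diag_mx a.
Proof. by apply/matrixP => i j; rewrite !diag_mul_entry mulrC. Qed.

Lemma cs_id m (sg : 'rV[R]_m) t :
  cosm sg t *m cosm sg t + sinm sg t *m sinm sg t = 1%:M.
Proof.
apply/matrixP => i j; rewrite mxE !diag_mul_entry !mxE -mulrnDl -!expr2 cos2Dsin2.
done.
Qed.

Lemma diag_kill m p (A : 'M[R]_(p, m)) (sg : 'rV[R]_m) t :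
  A *m diag_mx sg = 0 -> A *m sinm sg t = 0 /\ A *m cosm sg t = A.
Proof.
move=> h.
have h' : forall i j, A i j = 0 \/ sg 0 j = 0.
  move=> i j; have := congr1 (fun M : 'M[R]_(p,m) => M i j) h; rewrite /= mul_mx_diag !mxE.
  by move/eqP; rewrite mulf_eq0 => /orP [] /eqP; [left|right].
split; apply/matrixP => i j; rewrite mul_mx_diag !mxE;
  case: (h' i j) => ->; rewrite ?mul0r ?sin0 ?cos0 ?mulr0 ?mulr1 //.
Qed.
End Geo.
Section Geo2.
Variable R : realType.
Lemma cancel3 a b (Bt : 'M[R]_(a,b)) (E : 'M[R]_b) (B : 'M[R]_(b,a)) :
  1%:M + Bt *m E *m B + (Bt *m (E *m B) + Bt *m (- (E + E)) *m B) = 1%:M.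
Proof.
rewrite mulmxN mulNmx mulmxDr mulmxDl !mulmxA.
apply/matrixP => i j; rewrite !mxE; ring.
Qed.
Lemma geo n r (X : 'M[R]_(n,r)) (Yb : 'M[R]_(n, n - r)) (D U : 'M[R]_(n,r))
   (sigma : 'rV[R]_r) (V : 'M[R]_r) t :
  orth_compl X Yb -> X^T *m D = 0 -> thin_svd D U sigma V ->
  let Xt := geod X U sigma V t in let T := transp X U sigma V t in
  [/\ Xt^T *m Xt = 1%:M,
      (forall p (z : 'M[R]_(n, p)), X^T *m z = 0 -> Xt^T *m (T *m z) = 0),
      (T *m Yb)^T *m (T *m Yb) = 1%:M &
      Xt *m Xt^T + (T *m Yb) *m (T *m Yb)^T = 1%:M].
Proof.
move=> [XX YY XY _] XD [DE UU VV _] Xt T.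
set C := cosm sigma t; set S := sinm sigma t.
set W := X *m V; set A := X^T *m U.
have VVt : V *m V^T = 1%:M by apply: mulmx1C.
have AD : A *m diag_mx sigma = 0.
  have h : X^T *m D *m V = 0 by rewrite XD mul0mx.
  by rewrite DE !mulmxA -(mulmxA _ V^T V) VV mulmx1 in h.
have [AS AC] := diag_kill t AD; rewrite -/S -/C in AS AC.
have CT : C^T = C by rewrite tr_diag_mx.
have ST : S^T = S by rewrite tr_diag_mx.
have CS : C *m S = S *m C by apply: diagC.
have CCSS : C *m C + S *m S = 1%:M by apply: cs_id.
have SAT : S *m A^T = 0.
  have h : S *m A^T = (A *m S)^T by rewrite [(A *m S)^T]trmx_mul ST.
  by rewrite h AS trmx0.
have WW : W^T *m W = 1%:M by rewrite /W trmx_mul mid4 XX mulmx1.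
have WU : W^T *m U = V^T *m A by rewrite /W trmx_mul -mulmxA.
have UW : U^T *m W = A^T *m V by rewrite /W trmx_mul trmxK mulmxA.
set Q := W *m C + U *m S.
have XtE : Xt = Q *m V^T by rewrite /Xt /geod mul_row_col.
have QT : Q^T = C *m W^T + S *m U^T by rewrite /Q raddfD /= !trmx_mul CT ST.
have QQ : Q^T *m Q = 1%:M.
  rewrite QT /Q mulmxDl !mulmxDr !mid4 WW UU WU UW !mulmx1.
  rewrite -(mulmxA C) -(mulmxA V^T) AS !mulmx0 addr0 (mulmxA S A^T) SAT !mul0mx add0r.
  exact: CCSS.
have G1 : Xt^T *m Xt = 1%:M.
  by rewrite XtE trmx_mul trmxK mid4 QQ mulmx1 VVt.
set E := C - 1%:M.
set K := W *m (- S) + U *m E.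
have ET : E^T = E by rewrite /E raddfB /= CT trmx1.
have AE : A *m E = 0 by rewrite /E mulmxBr AC mulmx1 subrr.
have EAT : E *m A^T = 0.
  have h : E *m A^T = (A *m E)^T by rewrite [(A *m E)^T]trmx_mul ET.
  by rewrite h AE trmx0.
have TE : T = 1%:M + K *m U^T.
  rewrite /T /transp mul_row_col -/W -/C -/S /K /E !mulmxDl !mulmxBr !mulmxBl !mulmx1.
  apply/matrixP => i j; rewrite !mxE.
  ring.
have QK : Q^T *m K = - S.
  rewrite QT /K mulmxDl !mulmxDr !mid4 WW UU WU UW !mulmx1.
  rewrite -(mulmxA C (V^T *m A) C) -(mulmxA V^T A C) AC.
  rewrite (mulmxA S A^T) SAT !mul0mx !mulmxN !mulmx1 CS.
  apply/matrixP => i j; rewrite !mxE; ring.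
have G2 : forall p (z : 'M[R]_(n, p)), X^T *m z = 0 -> Xt^T *m (T *m z) = 0.
  move=> p z Xz.
  have WZ : W^T *m z = 0 by rewrite /W trmx_mul -mulmxA Xz mulmx0.
  have QZ : Q^T *m z = S *m (U^T *m z) by rewrite QT mulmxDl -!mulmxA WZ mulmx0 add0r.
  rewrite XtE trmx_mul trmxK TE mulmxDl mul1mx.
  by rewrite -(mulmxA V) mulmxDr QZ -(mulmxA K) (mulmxA Q^T K) QK mulNmx subrr mulmx0.
set B := U^T *m Yb.
have WY : W^T *m Yb = 0 by rewrite /W trmx_mul -mulmxA XY mulmx0.
have KT : K^T = - S *m W^T + E *m U^T.
  by rewrite /K raddfD /= !trmx_mul linearN /= ST ET.
have KY : K^T *m Yb = E *m B by rewrite KT mulmxDl -!mulmxA WY mulmx0 add0r.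
have KK : K^T *m K = - (E + E).
  rewrite KT /K mulmxDl !mulmxDr !mid4 WW UU WU UW !mulmx1.
  rewrite -(mulmxA (- S) (V^T *m A) C) -(mulmxA V^T A C) AC (mulmxA E A^T) EAT !mul0mx.
  have SSE : S *m S = 1%:M - C *m C by rewrite -CCSS addrC addKr.
  rewrite [- S *m - S]mulNmx mulmxN opprK SSE !mulmxN !mulmx1 /E mulmxBl mul1mx.
  apply/matrixP => i j; rewrite !mxE; ring.
have TY : T *m Yb = Yb + K *m B by rewrite TE mulmxDl mul1mx -mulmxA.
have G3 : (T *m Yb)^T *m (T *m Yb) = 1%:M.
  rewrite TY [(Yb + _)^T]raddfD /= [(K *m B)^T]trmx_mul mulmxDl !mulmxDr YY.
  have e1 : Yb^T *m (K *m B) = B^T *m E *m B.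
    have h : Yb^T *m K = (K^T *m Yb)^T by rewrite [(K^T *m Yb)^T]trmx_mul trmxK.
    by rewrite mulmxA h KY [(E *m B)^T]trmx_mul ET.
  rewrite e1 -(mulmxA B^T K^T Yb) KY (mid4 B^T K^T K B) KK.
  exact: cancel3.
split => //.
have rn : (r <= n)%N := rank_le XX.
apply: (block_orth' (subnKC rn)) => //.
exact: G2.
Qed.
End Geo2.
Section Coord.
Variable R : realType.
Lemma tr_mxvec m p (M N : 'M[R]_(m,p)) : \tr (M^T *m N) = (mxvec M *m (mxvec N)^T) 0 0.
Proof.
rewrite mxE (reindex _ (curry_mxvec_bij _ _)) /=.
rewrite /mxtrace; under [LHS]eq_bigr do rewrite mxE.
rewrite exchange_big pair_big /=; apply: eq_bigr => -[i j] _ /=.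
by rewrite !mxE !mxvecE.
Qed.

Variables (k : nat) (n r : 'I_k -> nat).
Implicit Types (Yb : forall i, 'M[R]_(n i, n i - r i)).

Lemma coord_lin Yb (P Q S : @fam R k n r) a b :
  coordvec Yb (fun i => P i - a *: Q i + b *: S i) =
  coordvec Yb P - a *: coordvec Yb Q + b *: coordvec Yb S.
Proof.
apply/matrixP => x y; rewrite !mxE.
rewrite mulmxDr mulmxBr -!scalemxAr !(linearD, linearB, linearZ) /= !mxE.
rewrite !linearN /= !mxE mulrN.
by [].
Qed.

Lemma coord_dec Yb c : (forall i, (Yb i)^T *m Yb i = 1%:M) ->
  coordvec Yb (locdecode Yb c) = c.
Proof.
move=> hY; rewrite /coordvec /locdecode.
rewrite -[RHS]submxcolK; apply: eq_mxcol => i.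
by rewrite mulmxA hY mul1mx vec_mxK trmxK.
Qed.

Lemma ipf_coord Yb (A B : @fam R k n r) :
  (forall i, Yb i *m ((Yb i)^T *m A i) = A i) ->
  ipf A B = ((coordvec Yb A)^T *m coordvec Yb B) 0 0.
Proof.
move=> hA; rewrite /coordvec tr_mxcol mul_mxrow_mxcol summxE /ipf.
apply: eq_bigr => i _; rewrite trmxK -tr_mxvec.
by rewrite -{1}hA trmx_mul -mulmxA.
Qed.
End Coord.
Unset Implicit Arguments.
Theorem theorem6p6 (R : realType) (k : nat) (n r : 'I_k -> nat)
  (f : (forall i : 'I_k, 'M[R]_(n i, r i)) -> R)
  (G : (forall i : 'I_k, 'M[R]_(n i, r i)) -> forall i : 'I_k, 'M[R]_(n i, r i))
  (hG : forall X E : forall i : 'I_k, 'M[R]_(n i, r i),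
     is_derive (0 : R) (1 : R) (fun s : R => f (fun j => X j + s *: E j))
       (ipf (G X) E))
  (X : forall i : 'I_k, 'M[R]_(n i, r i))
  (Yb : forall i : 'I_k, 'M[R]_(n i, n i - r i))
  (hXY : forall i, orth_compl (X i) (Yb i))
  (D : forall i : 'I_k, 'M[R]_(n i, r i))
  (hD : forall i, (X i)^T *m D i = 0)
  (U : forall i : 'I_k, 'M[R]_(n i, r i))
  (sigma : forall i : 'I_k, 'rV[R]_(r i))
  (V : forall i : 'I_k, 'M[R]_(r i))
  (hsvd : forall i, thin_svd (D i) (U i) (sigma i) (V i))
  (t : R) (ht : 0 < t)
  (Hc L : 'M[R]_(Ndim n r)) (hL : L \in unitmx) (hH : Hc = L *m L^T) :
  let Xt : @fam R k n r := fun i => geod (X i) (U i) (sigma i) (V i) t in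
  let T := fun i => transp (X i) (U i) (sigma i) (V i) t in
  let Ybt := fun i => T i *m Yb i in
  let S : @fam R k n r := fun i => t *: (T i *m D i) in
  let grad := fun (Z : @fam R k n r) (i : 'I_k) =>
    (1%:M - Z i *m (Z i)^T) *m G Z i in
  let Yd : @fam R k n r := fun i => grad Xt i - T i *m grad X i in
  let Hop := fun Z : @fam R k n r => locdecode Ybt (Hc *m coordvec Ybt Z) in
  let HS := Hop S in
  let Hplus := fun (Z : @fam R k n r) (i : 'I_k) =>
    Hop Z i - (ipf HS Z / ipf HS S) *: HS i + (ipf Yd Z / ipf S Yd) *: Yd i in
  let s := coordvec Ybt S in
  let y := coordvec Ybt Yd in
  0 < ipf S Yd ->
  exists Hp : 'M[R]_(Ndim n r),
    [/\ forall Z : @fam R k n r, (forall i, (Xt i)^T *m Z i = 0) ->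
          (forall i, (Xt i)^T *m Hplus Z i = 0) /\
          coordvec Ybt (Hplus Z) = Hp *m coordvec Ybt Z,
        Hp = bfgs_mx Hc s y &
        bfgs_optimal Hc L s y Hp].
Proof.
move=> Xt T Ybt S grad Yd Hop HS Hplus s y hpos.
have GG : forall i, [/\ (Xt i)^T *m Xt i = 1%:M,
      (forall p (z : 'M[R]_(n i, p)), (X i)^T *m z = 0 -> (Xt i)^T *m (T i *m z) = 0),
      (T i *m Yb i)^T *m (T i *m Yb i) = 1%:M &
      Xt i *m (Xt i)^T + (T i *m Yb i) *m (T i *m Yb i)^T = 1%:M].
  by move=> i; exact: geo (hXY i) (hD i) (hsvd i).
have XX : forall i, (Xt i)^T *m Xt i = 1%:M by move=> i; case: (GG i).
have YY : forall i, (Ybt i)^T *m Ybt i = 1%:M by move=> i; case: (GG i).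
have XtT : forall i p (z : 'M[R]_(n i, p)), (X i)^T *m z = 0 -> (Xt i)^T *m (T i *m z) = 0.
  by move=> i; case: (GG i).
have XtY : forall i, (Xt i)^T *m Ybt i = 0.
  by move=> i; apply: XtT; case: (hXY i).
have proj : forall i p (z : 'M[R]_(n i, p)), (Xt i)^T *m z = 0 -> Ybt i *m ((Ybt i)^T *m z) = z.
  move=> i p z hz; case: (GG i) => _ _ _ h.
  by rewrite -[RHS]mul1mx -h mulmxDl -(mulmxA (Xt i)) hz mulmx0 add0r -mulmxA.
have XYd : forall i, (Xt i)^T *m Yd i = 0.
  move=> i; rewrite /Yd /grad mulmxBr.
  rewrite XtT; last first.
    case: (hXY i) => hX _ _ _.
    by rewrite mulmxA mulmxBr mulmx1 mulmxA hX mul1mx subrr mul0mx.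
  by rewrite mulmxA mulmxBr mulmx1 mulmxA XX mul1mx subrr mul0mx subr0.
have XS : forall i, (Xt i)^T *m S i = 0.
  by move=> i; rewrite /S -scalemxAr XtT ?scaler0 // hD.
have decR : forall c i, Ybt i *m ((Ybt i)^T *m locdecode Ybt c i) = locdecode Ybt c i.
  by move=> c i; rewrite /locdecode (mulmxA (Ybt i)^T) YY mul1mx.
have XdecR : forall c i, (Xt i)^T *m locdecode Ybt c i = 0.
  by move=> c i; rewrite /locdecode (mulmxA (Xt i)^T) XtY mul0mx.
have cHS : coordvec Ybt HS = Hc *m s by rewrite /HS /Hop coord_dec.
have iHS : forall Z, ipf HS Z = dot (Hc *m s) (coordvec Ybt Z).
  move=> Z; rewrite (ipf_coord (Yb := Ybt) (A := HS)); first by rewrite cHS.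
  move=> i; exact: decR.
have iYd : forall Z, ipf Yd Z = dot y (coordvec Ybt Z).
  move=> Z; rewrite (ipf_coord (Yb := Ybt) (A := Yd)) //.
  move=> i; exact: proj.
have iSY : ipf S Yd = dot y s.
  rewrite (ipf_coord (Yb := Ybt) (A := S)); first by rewrite dotC.
  move=> i; exact: proj.
have aE : (s^T *m Hc *m s) 0 0 = dot (Hc *m s) s by rewrite dotC /dot mulmxA.
have bE : (y^T *m s) 0 0 = dot y s by [].
exists (bfgs_mx Hc s y); split => //.
- move=> Z hZ; split.
    move=> i; rewrite /Hplus mulmxDr mulmxBr -!scalemxAr XYd /HS /Hop !XdecR.
    by rewrite !scaler0 subrr addr0.
  rewrite (coord_lin Ybt (Hop Z) HS Yd) cHS /Hop coord_dec // -/y.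
  rewrite bfgs_mul aE bE iHS iYd iSY -/HS iHS -/s.
  by rewrite ![_ / _]mulrC.
- apply: bfgs_opt => //; by rewrite -iSY.
Qed.
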